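(* Let $A\in\mathbb{C}^{n\times n}_r$ be represented by its Hartwig-Spindelb\''{o}ck decomposition $A=U\left(\begin{array}{cc}\Sigma K & \Sigma L\\ 0 & 0\end{array}\right)U^*$, where $U\in\mathbb{C}^{n\times n}$ is unitary, $\Sigma={\rm diag}(\sigma_1,\dots,\sigma_r)$ is the diagonal matrix of the (positive) singular values of $A$, and $K\in\mathbb{C}^{r\times r}$, $L\in\mathbb{C}^{r\times(n-r)}$ satisfy $KK^*+LL^*=I_r$. Write $\left(\begin{array}{cc}G_1 & G_2\\ G_3 & G_4\end{array}\right)=U^*GU$ with $G_1\in\mathbb{C}^{r\times r}$, $G_2\in\mathbb{C}^{r\times(n-r)}$, $G_3\in\mathbb{C}^{(n-r)\times r}$, $G_4\in\mathbb{C}^{(n-r)\times(n-r)}$, and let $\Delta=\left(\begin{array}{cc}K & L\end{array}\right)U^*GU\left(\begin{array}{c}K^*\\ L^*\end{array}\right)$. Then: \begin{enumerate}[$(1)$] \item ${\rm rank}(A)={\rm rank}(AA^{\sim})$ if and only if $\Delta$ is nonsingular. \item ${\rm rank}(A)={\rm rank}(A^{\sim}A)$ if and only if $G_1$ is nonsingular. \item If $\Delta$ and $G_1$ are nonsingular, then \begin{align*} A^{\mathfrak{m}}&=GU\left(\begin{array}{cc}K^*(G_1\Sigma\Delta)^{-1} & 0\\ L^*(G_1\Sigma\Delta)^{-1} & 0\end{array}\right)U^*G\\ &=U\left(\begin{array}{cc}(G_1K^*+G_2L^* )(\Sigma\Delta)^{-1} & (G_1K^*+G_2L^* )(G_1\Sigma\Delta)^{-1}G_2\\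 (G_3K^*+G_4L^* )(\Sigma\Delta)^{-1} & (G_3K^*+G_4L^* )(G_1\Sigma\Delta)^{-1}G_2\end{array}\right)U^*. \end{align*} \end{enumerate}
   Context: $G=\left(\begin{array}{cc}1&0\\0&-I_{n-1}\end{array}\right)$ is the Minkowski metric matrix of order $n$; the Minkowski adjoint of $A\in\mathbb{C}^{m\times n}$ is $A^{\sim}=GA^*F$ with $G,F$ the Minkowski metric matrices of orders $n$ and $m$. The Minkowski inverse $A^{\mathfrak{m}}$ of $A$ is the unique $X$ (when it exists) with $AXA=A$, $XAX=X$, $(AX)^{\sim}=AX$, $(XA)^{\sim}=XA$. *)

(* Defs.v *)
From HB Require Import structures.
From mathcomp Require Import all_boot all_order all_algebra.
Set Implicit Arguments. Unset Strict Implicit. Unset Printing Implicit Defensive.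
Import Order.TTheory GRing.Theory Num.Theory.
Local Open Scope ring_scope.

(* Complex scalars: an arbitrary numClosedFieldType C (e.g. the complex
   numbers), with complex conjugation Num.conj. *)

Definition ctmx (C : numClosedFieldType) (m n : nat) (A : 'M[C]_(m, n))
  : 'M[C]_(n, m) := (map_mx Num.conj A)^T.

Definition minkG (C : numClosedFieldType) (n : nat) : 'M[C]_n :=
  \matrix_(i < n, j < n)
     (if i == j then (if nat_of_ord i == 0%N then 1 else -1) else 0).

Definition madj (C : numClosedFieldType) (m n : nat) (A : 'M[C]_(m, n))
  : 'M[C]_(n, m) := minkG C n *m ctmx A *m minkG C m.

Definition is_mink_inverse (C : numClosedFieldType) (m n : nat)
  (A : 'M[C]_(m, n)) (X : 'M[C]_(n, m)) : Prop :=
  [/\ A *m X *m A = A, X *m A *m X = X,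
      madj (A *m X) = A *m X & madj (X *m A) = X *m A].

(* Main.v *)
Require Import Defs.
From HB Require Import structures.
From mathcomp Require Import all_boot all_order all_algebra.
Import Order.TTheory GRing.Theory Num.Theory.
Local Open Scope ring_scope.
Set Implicit Arguments. Unset Strict Implicit.
Section S.
Variable C : numClosedFieldType.
Lemma ctmxM m n p (A : 'M[C]_(m,n)) (B : 'M[C]_(n,p)) : ctmx (A *m B) = ctmx B *m ctmx A.
Proof. by rewrite /ctmx map_mxM trmx_mul. Qed.
Lemma ctmxK m n (A : 'M[C]_(m,n)) : ctmx (ctmx A) = A.
Proof. by apply/matrixP=> i j; rewrite !mxE conjCK. Qed.
Lemma ctmx1 n : ctmx (1%:M : 'M[C]_n) = 1%:M.
Proof. by apply/matrixP=> i j; rewrite !mxE eq_sym rmorph_nat. Qed.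
Lemma ctmx0 m n : ctmx (0 : 'M[C]_(m,n)) = 0.
Proof. by apply/matrixP=> i j; rewrite !mxE rmorph0. Qed.
Lemma ctmx_row m n1 n2 (A : 'M[C]_(m,n1)) (B : 'M[C]_(m,n2)) : ctmx (row_mx A B) = col_mx (ctmx A) (ctmx B).
Proof. by rewrite /ctmx map_row_mx tr_row_mx. Qed.
Lemma ctmx_col m1 m2 n (A : 'M[C]_(m1,n)) (B : 'M[C]_(m2,n)) : ctmx (col_mx A B) = row_mx (ctmx A) (ctmx B).
Proof. by rewrite /ctmx map_col_mx tr_col_mx. Qed.
Lemma ctmx_block m1 m2 n1 n2 (A : 'M[C]_(m1,n1)) (B : 'M[C]_(m1,n2)) (D : 'M[C]_(m2,n1)) (E : 'M[C]_(m2,n2)) :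
  ctmx (block_mx A B D E) = block_mx (ctmx A) (ctmx D) (ctmx B) (ctmx E).
Proof. by rewrite /ctmx map_block_mx tr_block_mx. Qed.
Lemma minkGG n : minkG C n *m minkG C n = 1%:M.
Proof.
apply/matrixP=> i j; rewrite !mxE (bigD1 i) //= big1 ?addr0.
  rewrite !mxE eqxx; have [->|ne] := eqVneq i j.
    by case: ifP => _; rewrite ?mulr1 ?mulrNN ?mulr1.
  by rewrite mulr0.
by move=> k nk; rewrite !mxE eq_sym (negPf nk) mul0r.
Qed.
Lemma ctmxG n : ctmx (minkG C n) = minkG C n.
Proof.
apply/matrixP=> i j; rewrite !mxE eq_sym; case: eqP => [->|_]; last by rewrite rmorph0.
by case: ifP => _; rewrite ?rmorphN rmorph1.
Qed.
Lemma rank_l m n p (P : 'M[C]_(m,n)) (Q : 'M[C]_(n,m)) (M : 'M[C]_(m,p)) :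
  P *m Q = 1%:M -> \rank (Q *m M) = \rank M.
Proof.
move=> h; apply/eqP; rewrite eqn_leq mxrankM_maxr /=.
have {1}-> : M = P *m (Q *m M) by rewrite mulmxA h mul1mx.
exact: mxrankM_maxr.
Qed.
Lemma rank_r m n p (P : 'M[C]_(m,n)) (Q : 'M[C]_(n,m)) (M : 'M[C]_(p,m)) :
  P *m Q = 1%:M -> \rank (M *m P) = \rank M.
Proof.
move=> h; apply/eqP; rewrite eqn_leq mxrankM_maxl /=.
have {1}-> : M = (M *m P) *m Q by rewrite -mulmxA h mulmx1.
exact: mxrankM_maxl.
Qed.
Lemma tail1 m n (X Y : 'M[C]_(m,n)) : X *m 1%:M = Y *m 1%:M -> X = Y.
Proof. by rewrite !mulmx1. Qed.
Lemma tail2 m n p (X : 'M[C]_(m,n)) (Y : 'M[C]_(n,p)) (Z : 'M[C]_(m,p)) :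
  X *m Y = Z -> forall q (M : 'M[C]_(p,q)), X *m (Y *m M) = Z *m M.
Proof. by move=> h q M; rewrite mulmxA h. Qed.
Lemma herm_inv n (H Y : 'M[C]_n) : ctmx H = H -> Y *m H = 1%:M -> ctmx Y = Y.
Proof.
move=> hH h; have h2 := mulmx1C h.
have h3 : ctmx Y *m H = 1%:M by rewrite -hH -ctmxM h2 ctmx1.
by rewrite -[ctmx Y]mulmx1 -h2 mulmxA h3 mul1mx.
Qed.
Lemma ctmx_unit n (S : 'M[C]_n) : S \in unitmx -> ctmx S \in unitmx.
Proof.
move=> u; have : ctmx S *m ctmx (invmx S) = 1%:M by rewrite -ctmxM mulVmx // ctmx1.
by case/mulmx1_unit.
Qed.
Lemma inv_eq n (X Y : 'M[C]_n) : X *m Y = 1%:M -> X = invmx Y.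
Proof.
move=> h; have [_ uY] := mulmx1_unit h.
by rewrite -[X]mulmx1 -(mulmxV uY) mulmxA h mul1mx.
Qed.
Lemma madjM n (X Y : 'M[C]_n) : madj (X *m Y) = madj Y *m madj X.
Proof. by rewrite /madj ctmxM !mulmxA -[_ *m minkG C n *m minkG C n]mulmxA minkGG mulmx1. Qed.
Lemma madjK n (X : 'M[C]_n) : madj (madj X) = X.
Proof. by rewrite /madj !ctmxM ctmxK ctmxG !mulmxA minkGG mul1mx -mulmxA minkGG mulmx1. Qed.
Lemma mink_unique n (A X Y : 'M[C]_n) : is_mink_inverse A X -> is_mink_inverse A Y -> X = Y.
Proof.
case=> [h1 h2 h3 h4] [k1 k2 k3 k4].
have eX : X = X *m A *m Y.
  have e1 : madj A = madj A *m (A *m Y) by rewrite -k3 -madjM k1.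
  rewrite -{1}h2 -{1}(mulmxA X A X) -{1}h3 madjM e1.
  by rewrite (mulmxA (madj X)) -madjM h3 !mulmxA h2.
have eY : Y = X *m A *m Y.
  have e1 : madj A = X *m A *m madj A by rewrite -h4 -madjM mulmxA h1.
  rewrite -{1}k2 -{1}k4 madjM e1 -(mulmxA _ (madj A) (madj Y)) -madjM k4.
  by rewrite -!mulmxA (mulmxA Y A Y) k2.
by rewrite eX -eY.
Qed.
Lemma core n r (U Us G : 'M[C]_n) (T E : 'M[C]_(r,n)) (Tc Es : 'M[C]_(n,r))
  (S G1 D : 'M[C]_r) :
  U *m Us = 1%:M -> Us *m U = 1%:M -> G *m G = 1%:M -> T *m Tc = 1%:M ->
  E *m Es = 1%:M -> ctmx U = Us -> ctmx G = G -> ctmx T = Tc -> ctmx E = Es ->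
  S \in unitmx -> T *m Us *m G *m U *m Tc = G1 -> E *m Us *m G *m U *m Es = D ->
  ctmx G1 = G1 -> ctmx D = D -> G = minkG C n -> madj (U *m Tc *m S *m E *m Us) = G *m U *m Es *m ctmx S *m T *m Us *m G ->
  let A := U *m Tc *m S *m E *m Us in
  [/\ \rank (A *m madj A) = \rank D, \rank (madj A *m A) = \rank G1 &
   (D \in unitmx -> G1 \in unitmx ->
     is_mink_inverse A (G *m U *m Es *m invmx (G1 *m S *m D) *m T *m Us *m G))].
Proof.
move=> hUUs hUsU hGG hTTc hEEs cU cG cT cE uS hG1 hD cG1 cD hGm hmadj A.
have tUUs := tail2 hUUs; have tUsU := tail2 hUsU; have tGG := tail2 hGG.
have tTTc := tail2 hTTc; have tEEs := tail2 hEEs.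
have tG1 : forall q (M : 'M_(r,q)), T *m (Us *m (G *m (U *m (Tc *m M))))= G1 *m M.
  by move=> q M; rewrite !mulmxA hG1.
have tD : forall q (M : 'M_(r,q)), E *m (Us *m (G *m (U *m (Es *m M))))= D *m M.
  by move=> q M; rewrite !mulmxA hD.
have uSs := ctmx_unit uS.
have hSi : invmx S *m S = 1%:M by rewrite mulVmx.
have hSsi : invmx (ctmx S) *m ctmx S = 1%:M by rewrite mulVmx.
have hSi' : S *m invmx S = 1%:M by rewrite mulmxV.
have hSsi' : ctmx S *m invmx (ctmx S) = 1%:M by rewrite mulmxV.
rewrite hmadj /A; split.
- rewrite -!mulmxA tD.
  rewrite (rank_l _ hUsU) (rank_l _ hTTc) (rank_l _ hSi) !mulmxA.
  by rewrite (rank_r _ hGG) (rank_r _ hUsU) (rank_r _ hTTc) (rank_r _ hSsi').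
- rewrite -!mulmxA tG1.
  rewrite (rank_l _ hGG) (rank_l _ hUsU) (rank_l _ hEEs) (rank_l _ hSsi) !mulmxA.
  by rewrite (rank_r _ hUsU) (rank_r _ hEEs) (rank_r _ hSi').
move=> uD uG1.
set W := invmx (G1 *m S *m D).
have uW : G1 *m S *m D \in unitmx by rewrite !unitmx_mul uG1 uS uD.
have hW : G1 *m S *m D *m W = 1%:M by rewrite mulmxV.
have hW' : W *m (G1 *m S *m D) = 1%:M by rewrite mulVmx.
have tW' : forall q (M : 'M_(r,q)), W *m (G1 *m (S *m (D *m M))) = M.
  by move=> q M; rewrite !mulmxA -(mulmxA W) -(mulmxA W) hW' mul1mx.
have hZ : W *m G1 *m S *m D = 1%:M by rewrite -hW' !mulmxA.
have hZ' := mulmx1C hZ.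
have tZ' : forall q (M : 'M_(r,q)), D *m (W *m (G1 *m (S *m M))) = M.
  have e : D *m W *m G1 *m S = 1%:M by rewrite -!mulmxA (mulmxA W) hZ'.
  by move=> q M; rewrite !mulmxA e mul1mx.
have hV : S *m D *m W *m G1 = 1%:M by apply: mulmx1C; rewrite !mulmxA.
have cV := herm_inv cG1 hV.
have cZ := herm_inv cD hZ.
have cUs : ctmx Us = U by rewrite -cU ctmxK.
have cTc : ctmx Tc = T by rewrite -cT ctmxK.
have cEs : ctmx Es = E by rewrite -cE ctmxK.
split.
- apply: tail1; rewrite -!mulmxA tD tG1 tZ'.
  done.
- apply: tail1; rewrite -!mulmxA tG1 tD tW'.
  done.
- set V := S *m D *m W in cV *.
  have -> : U *m Tc *m S *m E *m Us *m (G *m U *m Es *m W *m T *m Us *m G) =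
           U *m Tc *m V *m T *m Us *m G.
    by apply: tail1; rewrite /V -!mulmxA tD.
  clearbody V; rewrite /madj -hGm !ctmxM cV cUs cTc cG cT cU.
  by apply: tail1; rewrite -!mulmxA tGG mul1mx.
- set Z := W *m G1 *m S in cZ *.
  have -> : G *m U *m Es *m W *m T *m Us *m G *m (U *m Tc *m S *m E *m Us) =
           G *m U *m Es *m Z *m E *m Us.
    by apply: tail1; rewrite /Z -!mulmxA tG1.
  clearbody Z; rewrite /madj -hGm !ctmxM cZ cUs cEs cG cU cE.
  by apply: tail1; rewrite -!mulmxA tGG mul1mx.
Qed.
End S.

Theorem theorem7p1 (C : numClosedFieldType) (r m : nat)
  (A U : 'M[C]_(r + m)) (s : 'rV[C]_r)
  (K : 'M[C]_r) (L : 'M[C]_(r, m))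
  (G1 : 'M[C]_r) (G2 : 'M[C]_(r, m)) (G3 : 'M[C]_(m, r)) (G4 : 'M[C]_m) :
  \rank A = r ->
  U *m ctmx U = 1%:M ->
  (forall i, 0 < s 0 i) ->
  K *m ctmx K + L *m ctmx L = 1%:M ->
  A = U *m block_mx (diag_mx s *m K) (diag_mx s *m L) 0 0 *m ctmx U ->
  ctmx U *m minkG C (r + m) *m U = block_mx G1 G2 G3 G4 ->
  let Sigma := diag_mx s in
  let Delta := row_mx K L *m (ctmx U *m minkG C (r + m) *m U)
                 *m col_mx (ctmx K) (ctmx L) in
  [/\ (\rank A = \rank (A *m madj A) <-> Delta \in unitmx),
      (\rank A = \rank (madj A *m A) <-> G1 \in unitmx) &
      (Delta \in unitmx -> G1 \in unitmx ->
       let X1 := minkG C (r + m) *m U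
            *m block_mx (ctmx K *m invmx (G1 *m Sigma *m Delta)) (0 : 'M_(r, m))
                        (ctmx L *m invmx (G1 *m Sigma *m Delta)) (0 : 'M_(m, m))
            *m ctmx U *m minkG C (r + m) in
       let X2 := U
            *m block_mx
                 ((G1 *m ctmx K + G2 *m ctmx L) *m invmx (Sigma *m Delta))
                 ((G1 *m ctmx K + G2 *m ctmx L) *m invmx (G1 *m Sigma *m Delta) *m G2)
                 ((G3 *m ctmx K + G4 *m ctmx L) *m invmx (Sigma *m Delta))
                 ((G3 *m ctmx K + G4 *m ctmx L) *m invmx (G1 *m Sigma *m Delta) *m G2)
            *m ctmx U in
       (forall X, is_mink_inverse A X <-> X = X1) /\ X1 = X2)].
Proof.
move=> h0 hU hs hKL hA hH Sigma Delta.
set G := minkG C (r + m).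
set Us := ctmx U.
set T : 'M[C]_(r, r + m) := row_mx 1%:M 0.
set Tc : 'M[C]_(r + m, r) := col_mx 1%:M 0.
set E := row_mx K L.
set Es := col_mx (ctmx K) (ctmx L).
have hUsU : Us *m U = 1%:M by apply: mulmx1C.
have hGG : G *m G = 1%:M by apply: minkGG.
have hTTc : T *m Tc = 1%:M by rewrite /T /Tc mul_row_col mulmx1 mul0mx addr0.
have hEEs : E *m Es = 1%:M by rewrite /E /Es mul_row_col.
have cU : ctmx U = Us by [].
have cG : ctmx G = G by apply: ctmxG.
have cT : ctmx T = Tc by rewrite /T ctmx_row ctmx1 ctmx0.
have cE : ctmx E = Es by rewrite /E ctmx_row.
have uS : Sigma \in unitmx.
  have e : Sigma *m diag_mx (\row_j (s 0 j)^-1) = 1%:M.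
    rewrite mulmx_diag -diag_const_mx; congr diag_mx; apply/rowP => j.
    by rewrite !mxE mulfV // gt_eqF.
  by case/mulmx1_unit: e.
have hH' : Us *m G *m U = block_mx G1 G2 G3 G4 by [].
have cH : ctmx (Us *m G *m U) = Us *m G *m U.
  by rewrite !ctmxM cG ctmxK mulmxA.
have hG1 : T *m Us *m G *m U *m Tc = G1.
  have -> : T *m Us *m G *m U *m Tc = T *m (Us *m G *m U) *m Tc by rewrite !mulmxA.
  rewrite hH' /T /Tc mul_row_block !mul1mx !mul0mx !addr0.
  by rewrite mul_row_col mulmx1 mulmx0 addr0.
have hD : E *m Us *m G *m U *m Es = Delta by rewrite /Delta !mulmxA.
have cG1 : ctmx G1 = G1.
  by move: cH; rewrite hH' ctmx_block => /(congr1 ulsubmx); rewrite !block_mxKul.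
have cD : ctmx Delta = Delta.
  rewrite -hD.
  have -> : E *m Us *m G *m U *m Es = E *m (Us *m G *m U) *m Es by rewrite !mulmxA.
  move: (Us *m G *m U) cH => H cH.
  by rewrite !ctmxM cH -cE ctmxK mulmxA.
have hA' : A = U *m Tc *m Sigma *m E *m Us.
  rewrite hA; suff -> : block_mx (diag_mx s *m K) (diag_mx s *m L) 0 0 = Tc *m Sigma *m E.
    by rewrite !mulmxA.
  by rewrite /Tc /E -mulmxA mul_col_mx mul1mx mul0mx mul_mx_row block_mxEv row_mx0.
have hmadj : madj (U *m Tc *m Sigma *m E *m Us) = G *m U *m Es *m ctmx Sigma *m T *m Us *m G.
  rewrite /madj -/G !ctmxM -cE !ctmxK /Tc ctmx_col ctmx1 ctmx0 -/T.
  by apply: tail1; rewrite -!mulmxA.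
have [r1 r2 r3] := core hU hUsU hGG hTTc hEEs cU cG cT cE uS hG1 hD cG1 cD (erefl G) hmadj.
rewrite h0 hA'; split.
- by rewrite r1 -row_free_unit /row_free; split => [h|/eqP h]; [apply/eqP|]; exact: esym h.
- by rewrite r2 -row_free_unit /row_free; split => [h|/eqP h]; [apply/eqP|]; exact: esym h.
move=> uD uG1 X1 X2.
set W := invmx (G1 *m Sigma *m Delta) in X1 X2 r3 *.
have hX1 : X1 = G *m U *m Es *m W *m T *m Us *m G.
  rewrite /X1 -/G -/Us.
  have -> : block_mx (ctmx K *m W) (0 : 'M_(r, m)) (ctmx L *m W) (0 : 'M_(m, m)) = Es *m W *m T.
    by rewrite /Es /T mul_col_mx mul_col_row !mulmx1 !mulmx0.
  by rewrite !mulmxA.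
split.
  move=> X; split => [h|->]; last by rewrite hX1; apply: r3.
  by rewrite hX1; apply: mink_unique h (r3 uD uG1).
have tUUs := tail2 (hU : U *m Us = 1%:M).
have -> : X1 = U *m (Us *m G *m U *m Es) *m W *m (T *m (Us *m G *m U)) *m Us.
  by rewrite hX1; apply: tail1; rewrite -!mulmxA !tUUs !mul1mx.
have uGSD : G1 *m Sigma *m Delta \in unitmx by rewrite !unitmx_mul uG1 uS uD.
have eWG : W *m G1 = invmx (Sigma *m Delta).
  have hW' : W *m (G1 *m Sigma *m Delta) = 1%:M by apply: mulVmx.
  by apply: inv_eq; rewrite -hW' !mulmxA.
rewrite hH' /Es /T mul_block_col mul_row_block !mul1mx !mul0mx !addr0.
rewrite -(mulmxA U (col_mx _ _) W) -(mulmxA U (_ *m W)) mul_col_mx mul_col_row.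
rewrite /X2 -!(mulmxA _ W G1) eWG.
done.
Qed.
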